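(* Let $A$ be a quasi-quantale and let $j$ be a contextual nucleus on $A$. Let $A_j=\{a\in A\mid j(a)=a\}$, which is a complete lattice whose join of $X\subseteq A_j$ is $\bigvee^j X=j(\bigvee X)$, and define on $A_j$ the operation $a\cdot b=j(ab)$. Then $(A_j,\cdot)$ is a quasi-quantale. If moreover $A$ is a left-unital quasi-quantale with identity $e$ (i.e. $ea=a$ for all $a\in A$), then $A_j$ is a left-unital quasi-quantale with identity $j(e)$.
   Context: A quasi-quantale is a complete lattice $A$ equipped with an associative binary operation $(a,b)\mapsto ab$ such that for every directed subset $X\subseteq A$ (non-empty, and any two elements of $X$ have an upper bound in $X$) and every $a\in A$: $(\bigvee X)a=\bigvee\{xa\mid x\in X\}$ and $a(\bigvee X)=\bigvee\{ax\mid x\in X\}$. An inflator on $A$ is a monotone map $s\colon A\to A$ with $a\leq s(a)$ for all $a$. A contextual nucleus is an inflator $j$ with $j\circ j=j$ and $j(a)j(b)\leq j(ab)$ for all $a,b\in A$. *)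

(* Defs.v *)
Set Implicit Arguments.

Definition image (S U : Type) (f : S -> U) (X : S -> Prop) : U -> Prop :=
  fun y => exists x, X x /\ y = f x.

Section Defs.
Variable T : Type.

Record is_complete_lattice (le : T -> T -> Prop) (sup : (T -> Prop) -> T) : Prop := {
  cl_refl : forall x, le x x;
  cl_trans : forall x y z, le x y -> le y z -> le x z;
  cl_antisym : forall x y, le x y -> le y x -> x = y;
  cl_sup_ub : forall (X : T -> Prop) x, X x -> le x (sup X);
  cl_sup_least : forall (X : T -> Prop) u, (forall x, X x -> le x u) -> le (sup X) u
}.

Definition directed (le : T -> T -> Prop) (X : T -> Prop) : Prop :=
  (exists x, X x) /\
  forall x y, X x -> X y -> exists z, X z /\ le x z /\ le y z.

Definition associative_op (mul : T -> T -> T) : Prop :=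
  forall a b c, mul (mul a b) c = mul a (mul b c).

Definition is_quasi_quantale (le : T -> T -> Prop) (sup : (T -> Prop) -> T)
    (mul : T -> T -> T) : Prop :=
  is_complete_lattice le sup /\ associative_op mul /\
  forall (X : T -> Prop) (a : T), directed le X ->
    mul (sup X) a = sup (image (fun x => mul x a) X) /\
    mul a (sup X) = sup (image (fun x => mul a x) X).

Definition left_identity (mul : T -> T -> T) (e : T) : Prop :=
  forall a, mul e a = a.

Definition is_left_unital_quasi_quantale (le : T -> T -> Prop)
    (sup : (T -> Prop) -> T) (mul : T -> T -> T) (e : T) : Prop :=
  is_quasi_quantale le sup mul /\ left_identity mul e.

Definition monotone (le : T -> T -> Prop) (s : T -> T) : Prop :=
  forall a b, le a b -> le (s a) (s b).

Definition inflator (le : T -> T -> Prop) (s : T -> T) : Prop :=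
  monotone le s /\ forall a, le a (s a).

Record contextual_nucleus (le : T -> T -> Prop) (mul : T -> T -> T) (j : T -> T)
    : Prop := {
  cn_inflator : inflator le j;
  cn_idem : forall a, j (j a) = j a;
  cn_mul : forall a b, le (mul (j a) (j b)) (j (mul a b))
}.

Definition fixset (j : T -> T) : Type := { a : T | j a = a }.

Definition fix_le (j : T -> T) (le : T -> T -> Prop) (a b : fixset j) : Prop :=
  le (proj1_sig a) (proj1_sig b).

Definition fix_sup (j : T -> T) (idem : forall a, j (j a) = j a)
    (sup : (T -> Prop) -> T) (X : fixset j -> Prop) : fixset j :=
  exist (fun a => j a = a) (j (sup (image (@proj1_sig T (fun a => j a = a)) X)))
        (idem (sup (image (@proj1_sig T (fun a => j a = a)) X))).

Definition fix_mul (j : T -> T) (idem : forall a, j (j a) = j a)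
    (mul : T -> T -> T) (a b : fixset j) : fixset j :=
  exist (fun x => j x = x) (j (mul (proj1_sig a) (proj1_sig b)))
        (idem (mul (proj1_sig a) (proj1_sig b))).

Definition fix_of (j : T -> T) (idem : forall a, j (j a) = j a) (e : T)
    : fixset j :=
  exist (fun x => j x = x) (j e) (idem e).

End Defs.

(* Main.v *)
Require Import Defs.
From Stdlib Require Import ProofIrrelevance.

Lemma fix_eq (T : Type) (j : T -> T) (a b : fixset j) :
  proj1_sig a = proj1_sig b -> a = b.
Proof.
  destruct a as [a ha], b as [b hb]; simpl; intros ->.
  f_equal; apply proof_irrelevance.
Qed.

Theorem proposition3p9 (T : Type) (le : T -> T -> Prop) (sup : (T -> Prop) -> T)
    (mul : T -> T -> T) (j : T -> T)
    (hA : is_quasi_quantale le sup mul)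
    (hj : contextual_nucleus le mul j) :
  is_quasi_quantale (@fix_le T j le) (fix_sup (cn_idem hj) sup)
                    (fix_mul (cn_idem hj) mul) /\
  (forall e : T, is_left_unital_quasi_quantale le sup mul e ->
     is_left_unital_quasi_quantale (@fix_le T j le) (fix_sup (cn_idem hj) sup)
       (fix_mul (cn_idem hj) mul) (@fix_of T j (cn_idem hj) e)).
Proof.
  destruct hA as [hL [hAs hD]].
  destruct hL as [refl trans anti ub least].
  pose proof (cn_idem hj) as idem.
  pose proof (cn_mul hj) as cmul.
  destruct (cn_inflator hj) as [jmon jinf].
  assert (pair_sup : forall a b, le a b -> sup (fun x => x = a \/ x = b) = b).
  { intros a b hab. apply anti.
    - apply least. intros x [->| ->]; auto.
    - apply ub; auto. }
  assert (pair_dir : forall a b, le a b -> directed le (fun x => x = a \/ x = b)).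
  { intros a b hab. split; [exists a; auto|].
    intros x y hx hy. exists b. split; [auto|].
    destruct hx as [->| ->], hy as [->| ->]; auto. }
  assert (monl : forall a b c, le a b -> le (mul a c) (mul b c)).
  { intros a b c hab. destruct (hD _ c (pair_dir a b hab)) as [h1 _].
    rewrite pair_sup in h1 by exact hab. rewrite h1.
    apply ub. exists a; auto. }
  assert (monr : forall a b c, le a b -> le (mul c a) (mul c b)).
  { intros a b c hab. destruct (hD _ c (pair_dir a b hab)) as [_ h1].
    rewrite pair_sup in h1 by exact hab. rewrite h1.
    apply ub. exists a; auto. }
  assert (key : forall x y, j (mul (j x) (j y)) = j (mul x y)).
  { intros x y. apply anti.
    - rewrite <- (idem (mul x y)). apply jmon. apply cmul.
    - apply jmon. apply trans with (mul (j x) y); [apply monl|apply monr]; apply jinf. }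
  assert (keyl : forall x y, j y = y -> j (mul (j x) y) = j (mul x y)).
  { intros x y hy. rewrite <- (key x y). rewrite hy. reflexivity. }
  assert (keyr : forall x y, j x = x -> j (mul x (j y)) = j (mul x y)).
  { intros x y hx. rewrite <- (key x y). rewrite hx. reflexivity. }
  assert (jsup : forall (Z W : T -> Prop),
     (forall w, W w -> exists z, Z z /\ w = j z) ->
     (forall z, Z z -> W (j z)) -> j (sup Z) = j (sup W)).
  { intros Z W h1 h2. apply anti.
    - apply jmon. apply least. intros z hz. apply trans with (j z); [apply jinf|].
      apply ub; auto.
    - rewrite <- (idem (sup Z)). apply jmon. apply least. intros w hw.
      destruct (h1 w hw) as [z [hz ->]]. apply jmon. apply ub; auto. }
  assert (QQ : is_quasi_quantale (@fix_le T j le) (fix_sup (cn_idem hj) sup)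
                    (fix_mul (cn_idem hj) mul)).
  { split; [|split].
    - constructor; unfold fix_le.
      + intros; apply refl.
      + intros; eapply trans; eauto.
      + intros; apply fix_eq; apply anti; auto.
      + intros X x hx. simpl. apply trans with (sup (image (@proj1_sig T (fun a => j a = a)) X)).
        * apply ub. exists x; auto.
        * apply jinf.
      + intros X u hu. simpl. destruct u as [u hu']. simpl in *.
        rewrite <- hu'. apply jmon. apply least. intros x [y [hy ->]]. apply hu; auto.
    - intros [a ha] [b hb] [c hc]. apply fix_eq. simpl.
      rewrite keyl by exact hc. rewrite keyr by exact ha. rewrite hAs; reflexivity.
    - intros X [a ha] [hne hdir].
      set (X' := image (@proj1_sig T (fun a => j a = a)) X).
      assert (dX : directed le X').
      { split.
        - destruct hne as [x hx]. exists (proj1_sig x). exists x; auto.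
        - intros x y [x0 [hx0 ->]] [y0 [hy0 ->]].
          destruct (hdir x0 y0 hx0 hy0) as [z [hz [h1 h2]]].
          exists (proj1_sig z). split; [exists z; auto|auto]. }
      destruct (hD X' a dX) as [E1 E2].
      split; apply fix_eq; simpl; fold X'.
      + rewrite keyl by exact ha. rewrite E1. apply jsup.
        * intros w [y [[x [hx ->]] ->]]. simpl. exists (mul (proj1_sig x) a).
          split; auto. exists (proj1_sig x). split; auto. exists x; auto.
        * intros z [y [[x [hx ->]] ->]]. exists (fix_mul (cn_idem hj) mul x (exist _ a ha)).
          split; [exists x; auto | reflexivity].
      + rewrite keyr by exact ha. rewrite E2. apply jsup.
        * intros w [y [[x [hx ->]] ->]]. simpl. exists (mul a (proj1_sig x)).
          split; auto. exists (proj1_sig x). split; auto. exists x; auto.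
        * intros z [y [[x [hx ->]] ->]]. exists (fix_mul (cn_idem hj) mul (exist _ a ha) x).
          split; [exists x; auto | reflexivity]. }
  split; [exact QQ|].
  intros e [_ he]. split; [exact QQ|].
  intros [a ha]. apply fix_eq. simpl. rewrite keyl by exact ha. rewrite he. exact ha.
Qed.
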